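(* Let $N\ge M\ge 1$. Let $H:\mathbb{R}^N\times\mathbb{R}^N\to\mathbb{R}$ be continuous, $\mathbb{Z}^N$-periodic in its first variable, with $H(y,0)\ge 0$ for all $y$. Let $\beta$ and $a$ be as in the context, and let $dq_0$ be a positive Radon measure on $\mathbb{R}^M$ satisfying condition (B) and $$\int_{|z|<1}|z|^{\gamma}\,dq_0(z)+\int_{|z|\ge 1}|z|^{\gamma-1}\,dq_0(z)<\infty,$$ with $\gamma=2$ in case (I) and $\gamma=1$ in case (II), where (I) $\;H(y,\nabla u)-a(y)\int_{\mathbb{R}^M}[u(y+\beta(z))-u(y)-\langle\nabla u(y),\beta(z)\rangle]\,dq_0(z)=0$ in $\mathbb{T}^N$, (II) $\;H(y,\nabla u)-a(y)\int_{\mathbb{R}^M}[u(y+\beta(z))-u(y)]\,dq_0(z)=0$ in $\mathbb{T}^N$. Let $u$ be an upper semicontinuous, $\mathbb{Z}^N$-periodic viscosity subsolution of (I) (resp. of (II)). If $u$ attains its maximum over $\mathbb{T}^N$ at some point $\bar y$, then $u$ is constant on $\mathbb{T}^N$.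
   Context: $\mathbb{T}^N=[0,1]^N$ is the unit torus; functions on $\mathbb{T}^N$ are identified with $\mathbb{Z}^N$-periodic functions on $\mathbb{R}^N$. $\beta:\mathbb{R}^M\to\mathbb{R}^N$ is continuous with $\beta(cz)=c\beta(z)$ for all $c>0$ and $|\beta(z)|\le B_1|z|$ for all $z$, for some constant $B_1>0$. $a:\mathbb{R}^N\to\mathbb{R}$ is continuous, $\mathbb{Z}^N$-periodic, with $a\ge a_0>0$ and $|a(y)-a(y')|\le L|y-y'|^{\theta_1}$ for some constants $a_0>0$, $L>0$, $\theta_1\in(0,1]$. Condition (B): let $S_0=\mathrm{supp}(dq_0)$. For any two points $y,y'\in\mathbb{T}^N$ there exist finitely many points $y_1,\dots,y_m\in\mathbb{T}^N$ with $y_1=y$, $y_m=y'$, such that for any positive numbers $\varepsilon_i>0$ ($1\le i\le m$) there exist subsets $J_i\subset S_0$ ($1\le i\le m-1$) with $y_i+\beta(z)\in B_{\varepsilon_i}(y_{i+1})$ (modulo $\mathbb{Z}^N$) for all $z\in J_i$ and $\int_{J_i}1\,dq_0(z)>0$. Viscosity subsolution: an upper semicontinuous periodic $u$ is a viscosity subsolution of (I) if for every $\hat y$ and every $\phi\in C^2(\mathbb{R}^N)$ such that $u-\phi$ attains a global maximum at $\hat y$ and $u(\hat y)=\phi(\hat y)$, the function $z\mapsto u(\hat y+\beta(z))-u(\hat y)-\langle\nabla\phi(\hat y),\beta(z)\rangle$ is $dq_0$-integrable and $H(\hat y,\nabla\phi(\hat y))-a(\hat y)\int_{\mathbb{R}^M}[u(\hat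 y+\beta(z))-u(\hat y)-\langle\nabla\phi(\hat y),\beta(z)\rangle]\,dq_0(z)\le 0$. For (II) the same with the term $\langle\nabla\phi(\hat y),\beta(z)\rangle$ removed from the integrand. *)

(* Defs.v *)
From HB Require Import structures.
From mathcomp Require Import all_boot all_order all_algebra.
From mathcomp Require Import all_classical all_reals all_analysis.
Set Implicit Arguments. Unset Strict Implicit. Unset Printing Implicit Defensive.
Import Order.TTheory GRing.Theory Num.Theory.
Import numFieldNormedType.Exports.
Local Open Scope classical_set_scope.
Local Open Scope ring_scope.

Section Defs.
Variable R : realType.

Definition eucl {n} (x : 'rV[R]_n) : R := Num.sqrt (\sum_(i < n) x 0 i ^+ 2).

Definition dotp {n} (x y : 'rV[R]_n) : R := \sum_(i < n) x 0 i * y 0 i.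

Definition intvec {n} (k : 'rV[int]_n) : 'rV[R]_n := map_mx (fun z : int => z%:~R) k.

Definition Zn_periodic {n} {T : Type} (f : 'rV[R]_n -> T) : Prop :=
  forall (y : 'rV[R]_n) (k : 'rV[int]_n), f (y + intvec k) = f y.

Definition usc {n} (u : 'rV[R]_n -> R) : Prop :=
  forall x (e : R), 0 < e -> \forall y \near x, u y < u x + e.

Definition evec {n} (i : 'I_n) : 'rV[R]_n := delta_mx 0 i.

Definition C2 {n} (phi : 'rV[R]_n -> R) : Prop :=
  continuous phi /\
  (forall i x, derivable phi x (evec i)) /\
  (forall i, continuous (fun x => 'D_(evec i) phi x)) /\
  (forall i j x, derivable (fun y => 'D_(evec i) phi y) x (evec j)) /\
  (forall i j, continuous (fun x => 'D_(evec j) (fun y => 'D_(evec i) phi y) x)).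

Definition grad {n} (phi : 'rV[R]_n -> R) (y : 'rV[R]_n) : 'rV[R]_n :=
  \row_(i < n) 'D_(evec i) phi y.

Definition RvBorel (m : nat) := g_sigma_algebraType (@open 'rV[R]_m).

Definition msupport {m} (mu : set (RvBorel m) -> \bar R) : set 'rV[R]_m :=
  [set z | forall U : set 'rV[R]_m, open U -> U z -> (0 < mu U)%E].

Definition radon {m} (mu : {measure set (RvBorel m) -> \bar R}) : Prop :=
  forall K : set 'rV[R]_m, compact K -> (mu K < +oo)%E.

Definition condB {N M} (beta : 'rV[R]_M -> 'rV[R]_N)
  (mu : {measure set (RvBorel M) -> \bar R}) : Prop :=
  forall y y' : 'rV[R]_N, exists (m : nat) (ys : nat -> 'rV[R]_N),
    (1 <= m)%N /\ ys 1%N = y /\ ys m = y' /\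
    forall eps : nat -> R, (forall i, (1 <= i <= m)%N -> 0 < eps i) ->
      exists J : nat -> set (RvBorel M),
        forall i, (1 <= i <= m.-1)%N ->
          [/\ measurable (J i),
              J i `<=` msupport mu,
              (forall z, J i z -> exists k : 'rV[int]_N,
                 eucl (ys i + beta z - (ys i.+1 + intvec k)) < eps i) &
              (0 < \int[mu]_(z in J i) 1)%E].

(* Viscosity subsolution. [compensated = true] is equation (I),
   [compensated = false] is equation (II). *)
Definition visc_sub {N M} (compensated : bool)
  (H : 'rV[R]_N -> 'rV[R]_N -> R) (a : 'rV[R]_N -> R)
  (beta : 'rV[R]_M -> 'rV[R]_N) (mu : {measure set (RvBorel M) -> \bar R})
  (u : 'rV[R]_N -> R) : Prop :=
  usc u /\ Zn_periodic u /\
  forall (yh : 'rV[R]_N) (phi : 'rV[R]_N -> R),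
    C2 phi ->
    (forall y, u y - phi y <= u yh - phi yh) ->
    u yh = phi yh ->
    let g := fun z : RvBorel M =>
      u (yh + beta z) - u yh
        - (if compensated then dotp (grad phi yh) (beta z) else 0) in
    mu.-integrable setT (fun z => (g z)%:E) /\
    H yh (grad phi yh) - a yh * fine (\int[mu]_(z in setT) (g z)%:E) <= 0.

End Defs.
Arguments intvec {R n}.

(* Main.v *)
Require Import Defs.
From HB Require Import structures.
From mathcomp Require Import all_boot all_order all_algebra.
From mathcomp Require Import all_classical all_reals all_analysis.
Import Order.TTheory GRing.Theory Num.Theory.
Import numFieldNormedType.Exports.
Local Open Scope classical_set_scope.
Local Open Scope ring_scope.
From mathcomp Require Import zify.
Section S.
Variable R : realType.
Lemma eucl_coord n (v : 'rV[R]_n) j : `|v 0 j| <= eucl v.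
Proof.
rewrite /eucl -sqrtr_sqr ler_sqrt ?sumr_ge0 // => [|i _]; last exact: sqr_ge0.
by rewrite (bigD1 j) //= lerDl sumr_ge0 // => i _; exact: sqr_ge0.
Qed.

Arguments eucl_coord {n}.
Lemma eucl_near n (P : set 'rV[R]_n) (x : 'rV[R]_n) : (\forall y \near x, P y) ->
  exists2 e : R, 0 < e & forall y, eucl (y - x) < e -> P y.
Proof.
move=> /nbhs_ballP [e e0 He]; exists e => // y hy; apply: He.
split => // i j; rewrite ord1 /ball /= -normrN opprB.
apply: le_lt_trans hy; have := @eucl_coord _ (y - x) j; by rewrite !mxE.
Qed.

Lemma key (N M : nat) (comp : bool) (H : 'rV[R]_N -> 'rV[R]_N -> R) (a : 'rV[R]_N -> R)
  (beta : 'rV[R]_M -> 'rV[R]_N) (mu : {measure set (RvBorel R M) -> \bar R})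
  (u : 'rV[R]_N -> R) (yh : 'rV[R]_N) :
  (forall y, 0 <= H y 0) -> (forall y, 0 < a y) -> visc_sub comp H a beta mu u ->
  (forall y, u y <= u yh) ->
  forall J : set (RvBorel R M), measurable J -> (0 < \int[mu]_(z in J) 1)%E ->
  exists z, J z /\ u (yh + beta z) = u yh.
Proof.
move=> H0 apos [_ [_ Hv]] umax J mJ J0.
have Dc : forall v x, 'D_v (fun _ : 'rV[R]_N => u yh) x = 0.
  by move=> v x; exact: derive_cst.
have C2c : C2 (fun _ : 'rV[R]_N => u yh).
  split; first exact: cst_continuous.
  split; first by move=> i x; exact: derivable_cst.
  have E : forall v, (fun x => 'D_v (fun _ : 'rV[R]_N => u yh) x) = cst 0.
    by move=> v; apply/funext => x; exact: Dc.
  split; first by move=> i; rewrite E; exact: cst_continuous.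
  split; first by move=> i j x; rewrite E; exact: derivable_cst.
  by move=> i j; rewrite E; under eq_fun do rewrite derive_cst; exact: cst_continuous.
have [] := Hv yh (fun _ => u yh) C2c.
- by move=> y; rewrite subrr subr_le0.
- by [].
have g0 : grad (fun _ : 'rV[R]_N => u yh) yh = 0.
  by apply/rowP => i; rewrite !mxE Dc.
rewrite g0 /=.
set g := fun z => _.
have gE : forall z, g z = (u (yh + beta z) - u yh)%:E.
  move=> z; rewrite /g; case: ifP => _; rewrite ?subr0 //.
  by rewrite /dotp big1 ?subr0 // => i _; rewrite mxE mul0r.
move=> gint ineq.
have gle : forall z, (g z <= 0)%E by move=> z; rewrite gE lee_fin subr_le0.
have fin := integrable_fin_num measurableT gint.
have IE : (\int[mu]_x g x = - \int[mu]_x `|g x|)%E.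
  rewrite -integral_ge0N; last by move=> x _; exact: abse_ge0.
  by apply: eq_integral => x _; rewrite lee0_abs ?oppeK // gle.
have Ige : (0 <= \int[mu]_x g x)%E.
  rewrite -(fineK fin) lee_fin.
  have : 0 <= a yh * fine (\int[mu]_x g x).
    by apply: le_trans (H0 yh) _; rewrite -subr_le0.
  by rewrite pmulr_rge0.
have Iabs0 : (\int[mu]_x `|g x| = 0)%E.
  apply/eqP; rewrite eq_le (integral_ge0 _ (fun x _ => abse_ge0 (g x))) andbT.
  by rewrite -oppe_ge0 -IE.
have [A [mA muA0 sub]] : ae_eq mu setT g (cst 0).
  by apply/ae_eq_integral_abs => //; exact: measurable_int gint.
apply: contrapT => Hno.
have JA : J `<=` A.
  move=> z Jz; apply: sub => /= h; apply: Hno; exists z; split => //.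
  have := h I; rewrite gE => -[] /eqP; rewrite subr_eq0 => /eqP //.
have HJ : (mu J <= 0)%E.
  by rewrite -muA0; apply: le_measure => //; rewrite inE.
rewrite integral_cst // mul1e in J0.
by rewrite leNgt J0 in HJ.
Qed.
End S.

Theorem theorem2p1 (R : realType) (N M : nat) (compensated : bool)
  (H : 'rV[R]_N -> 'rV[R]_N -> R)
  (beta : 'rV[R]_M -> 'rV[R]_N) (a : 'rV[R]_N -> R)
  (q0 : {measure set (RvBorel R M) -> \bar R})
  (B1 a0 L theta1 : R) (u : 'rV[R]_N -> R) (ybar : 'rV[R]_N) :
  (1 <= M)%N -> (M <= N)%N ->
  (* H *)
  continuous (fun p : 'rV[R]_N * 'rV[R]_N => H p.1 p.2) ->
  (forall (y p : 'rV[R]_N) (k : 'rV[int]_N), H (y + intvec k) p = H y p) ->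
  (forall y, 0 <= H y 0) ->
  (* beta *)
  continuous beta ->
  (forall (c : R) z, 0 < c -> beta (c *: z) = c *: beta z) ->
  0 < B1 -> (forall z, eucl (beta z) <= B1 * eucl z) ->
  (* a *)
  continuous a -> Zn_periodic a ->
  0 < a0 -> (forall y, a0 <= a y) ->
  0 < L -> 0 < theta1 -> theta1 <= 1 ->
  (forall y y', `|a y - a y'| <= L * powR (eucl (y - y')) theta1) ->
  (* q0 *)
  radon q0 -> condB beta q0 ->
  (let gam := if compensated then 2%N else 1%N in
   \int[q0]_(z in [set z : RvBorel R M | (eucl z < 1)%R]) ((eucl z ^+ gam)%R)%:E
   + \int[q0]_(z in [set z : RvBorel R M | (1 <= eucl z)%R]) ((eucl z ^+ gam.-1)%R)%:E
   < +oo)%E ->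
  (* u *)
  visc_sub compensated H a beta q0 u ->
  (forall y, u y <= u ybar) ->
  forall y, u y = u ybar.
Proof.
move=> _ _ _ _ H0 _ _ _ _ _ _ a0p aa _ _ _ _ _ hB _ hv umax y.
have apos : forall y, 0 < a y := fun y => lt_le_trans a0p (aa y).
have uper : forall v k, u (v - intvec k) = u v.
  by move=> v k; rewrite -(hv.2.1 (v - intvec k) k) subrK.
have [m [ys [m1 [y1 [ym Hch]]]]] := hB ybar y.
have step : forall i, (1 <= i <= m.-1)%N -> u (ys i) = u ybar -> u (ys i.+1) = u ybar.
  move=> i hi hui; apply/eqP; rewrite eq_le umax /=.
  apply/ler_addgt0Pr => e e0.
  have [d d0 Hd] := @eucl_near _ _ _ _ (hv.1 (ys i.+1) e e0).
  have [J HJ] := Hch (fun _ => d) (fun _ _ => d0).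
  have [mJ _ Hk Jpos] := HJ i hi.
  have umax' : forall y, u y <= u (ys i) by move=> y'; rewrite hui.
  have [z [Jz uz]] := @key _ _ _ _ _ _ _ _ _ _ H0 apos hv umax' _ mJ Jpos.
  have [k hk] := Hk z Jz.
  have hk' : eucl (ys i + beta z - intvec k - ys i.+1) < d.
    by move: hk; rewrite opprD addrA addrAC.
  have := Hd _ hk'; rewrite uper uz hui => /ltW //.
have all : forall j, (j.+1 <= m)%N -> u (ys j.+1) = u ybar.
  elim => [_|j IH hj]; first by rewrite y1.
  apply: step; [lia | apply: IH; lia].
by rewrite -ym -(prednK m1); apply: all; rewrite prednK.
Qed.
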